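(* Let $A$ be an irreducible $\{0,1\}$-matrix which is not a permutation matrix, and let $\mathcal{C}$ be a right Markov code for $(X_A,\sigma_A)$. Then the matrix $A(\mathcal{C})$ is irreducible and is not a permutation matrix.
   Context: For an $N\times N$ matrix $A$ with entries in $\{0,1\}$, $\Sigma_A=\{1,\dots,N\}$, $X_A$ is the set of sequences $(x_n)_{n\in\mathbb{N}}$ in $\Sigma_A$ with $A(x_n,x_{n+1})=1$ for all $n$, with shift $\sigma_A$. $B_k(X_A)$ is the set of admissible words of length $k$, $B_*(X_A)$ the union over $k\ge0$ (including the empty word). For a word $w=w_1\cdots w_\ell$, $\sigma_A(w)=w_2\cdots w_\ell$. A code is a nonempty $\mathcal{C}\subset B_*(X_A)$ such that any equality of concatenations $\omega(i_1)\cdots\omega(i_k)=\omega(j_1)\cdots\omega(j_n)$ of words of $\mathcal{C}$ forces $n=k$ and $\omega(i_m)=\omega(j_m)$ for all $m$; a prefix code is a code in which no word is a prefix of another. A finite prefix code $\mathcal{C}=\{\omega(1),\dots,\omega(M)\}\subset B_*(X_A)$, $\Sigma_{A(\mathcal{C})}=\{1,\dots,M\}$, is a right Markov code for $(X_A,\sigma_A)$ if: (i) for every $\gamma\in B_*(X_A)$ there is $\eta\in B_*(X_A)$ with $\gamma\eta\in B_*(X_A)$ and a unique finite sequence $(i_1,\dots,i_k)$ in $\Sigma_{A(\mathcal{C})}$ with $\gamma\eta=\omega(i_1)\cdots\omega(i_k)$; (ii) there is $L\in\mathbb{N}$ such that for all $i_1,\dots,i_L$ with $\omega(i_1)\cdots\omega(i_L)\in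 B_*(X_A)$ there exist $j_1,\dots,j_k\in\Sigma_{A(\mathcal{C})}$ with $\sigma_A(\omega(i_1))\omega(i_2)\cdots\omega(i_L)=\omega(j_1)\cdots\omega(j_k)$; (iii) for every $i,j$ there are $n_1,\dots,n_l$ with $\omega(i)\omega(n_1)\cdots\omega(n_l)\omega(j)\in B_*(X_A)$. $A(\mathcal{C})$ is the $M\times M$ $\{0,1\}$-matrix with $A(\mathcal{C})(i,j)=A(r(\omega(i)),s(\omega(j)))$, where $s(\omega(i))$, $r(\omega(i))$ are the first and last symbols of $\omega(i)$; equivalently $A(\mathcal{C})(i,j)=1$ iff $\omega(i)\omega(j)\in B_*(X_A)$. *)

(* Defs.v *)
From mathcomp Require Import all_boot all_order all_algebra all_fingroup.
Set Implicit Arguments. Unset Strict Implicit. Unset Printing Implicit Defensive.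

Definition zero_one_matrix (N : nat) (A : 'M[nat]_N) : Prop :=
  forall i j, A i j <= 1.

(* Irreducible: for all i, j there is n >= 1 with A^n(i,j) > 0, i.e. a path
   i = p_0 -> p_1 -> ... -> p_n = j of length n >= 1 with A(p_m,p_{m+1}) = 1. *)
Definition irreducible_mx (N : nat) (A : 'M[nat]_N) : Prop :=
  forall i j : 'I_N, exists s : seq 'I_N,
    s != [::] /\ path (fun a b => A a b == 1) i s /\ last i s = j.

Definition permutation_mx (N : nat) (A : 'M[nat]_N) : Prop :=
  exists s : 'S_N, forall i j, A i j = nat_of_bool (s i == j).

Definition in_XA (N : nat) (A : 'M[nat]_N) (x : nat -> 'I_N) : Prop :=
  forall n, A (x n) (x n.+1) = 1.

Definition admissible (N : nat) (A : 'M[nat]_N) (w : seq 'I_N) : Prop :=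
  w = [::] \/
  exists (x : nat -> 'I_N) (n : nat),
    in_XA A x /\ w = [seq x (n + k) | k <- iota 0 (size w)].

Definition concat_code (N M : nat) (omega : 'I_M -> seq 'I_N) (ks : seq 'I_M)
  : seq 'I_N := flatten (map omega ks).

Definition is_code (N M : nat) (A : 'M[nat]_N) (omega : 'I_M -> seq 'I_N) : Prop :=
  [/\ 0 < M, injective omega, (forall i, admissible A (omega i)) &
      forall ks ls : seq 'I_M, concat_code omega ks = concat_code omega ls ->
        size ks = size ls /\ map omega ks = map omega ls].

Definition is_prefix_code (N M : nat) (A : 'M[nat]_N) (omega : 'I_M -> seq 'I_N) : Prop :=
  is_code A omega /\ forall i j, i != j -> ~~ prefix (omega i) (omega j).

Definition right_Markov_code (N M : nat) (A : 'M[nat]_N) (omega : 'I_M -> seq 'I_N)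
  : Prop :=
  [/\ is_prefix_code A omega,
      (forall gamma, admissible A gamma ->
         exists eta, admissible A eta /\ admissible A (gamma ++ eta) /\
           exists ks, gamma ++ eta = concat_code omega ks /\
             forall ls, gamma ++ eta = concat_code omega ls -> ls = ks),
      (exists L, 0 < L /\
         forall (i1 : 'I_M) (rest : seq 'I_M), size rest = L.-1 ->
           admissible A (concat_code omega (i1 :: rest)) ->
           exists ls, behead (omega i1) ++ concat_code omega rest
                      = concat_code omega ls) &
      (forall i j, exists ns : seq 'I_M,
         admissible A (omega i ++ concat_code omega ns ++ omega j))].

(* A(C)(i,j) = A(r(omega i), s(omega j)), r = last symbol, s = first symbol
   (code words are nonempty; the default 0 ks never used for codes). *)
Definition code_matrix (N M : nat) (A : 'M[nat]_N) (omega : 'I_M -> seq 'I_N)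
  : 'M[nat]_M :=
  \matrix_(i, j) match rev (omega i), omega j with
                 | r :: _, s :: _ => A r s
                 | _, _ => 0
                 end.

(* Main.v *)
Require Import Defs.
From mathcomp Require Import all_boot all_order all_algebra all_fingroup.
From Stdlib Require Import ClassicalEpsilon.
From mathcomp Require Import zify.
Set Implicit Arguments. Unset Strict Implicit.

Section Aux.
Variables (N : nat) (A : 'M[nat]_N).

Lemma adm_nth w d i : admissible A w -> i.+1 < size w ->
  A (nth d w i) (nth d w i.+1) = 1.
Proof.
case=> [->//|[x [n [hx E]]]] Hi.
rewrite E !(nth_map 0) ?size_iota // ?(ltnW Hi) // !nth_iota ?(ltnW Hi) //.
by rewrite !add0n addnS hx.
Qed.

Lemma adm_cat_r u v : admissible A (u ++ v) -> admissible A v.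
Proof.
case=> [|[x [n [hx E]]]]; first by case: u => //= -> ; left.
right; exists x, (n + size u); split => //.
apply: (@eq_from_nth _ (nth (x 0) v 0)); first by rewrite size_map size_iota.
move=> i Hi.
rewrite (nth_map 0) ?size_iota // nth_iota // add0n.
have : nth (x 0) (u ++ v) (size u + i) = x (n + (size u + i)).
  rewrite E (nth_map 0) ?size_iota ?size_cat ?ltn_add2l // nth_iota ?size_cat ?ltn_add2l //.
rewrite nth_cat ltnNge leq_addr /= addKn addnA => <-.
exact: set_nth_default.
Qed.

Lemma path_adm (succ : 'I_N -> 'I_N) (Hs : forall i, A i (succ i) = 1) a s :
  path (fun u v => A u v == 1) a s -> admissible A (a :: s).
Proof.
move=> Hp; right.
pose x k := if k <= size s then nth a (a :: s) k else iter (k - size s) succ (last a s).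
exists x, 0; split.
  move=> k; rewrite /x.
  case: (ltngtP k (size s)) => Hk.
  - by move/(pathP a): Hp => /(_ k Hk) /eqP.
  - by rewrite subSn ?(ltnW Hk) //= Hs.
  - rewrite Hk subSnn /=.
    by have := nth_last a (a :: s); rewrite /= => ->; rewrite Hs.
apply: (@eq_from_nth _ a); first by rewrite size_map size_iota.
move=> i Hi; rewrite (nth_map 0) ?size_iota // nth_iota // /x add0n.
by rewrite -ltnS Hi.
Qed.

End Aux.

Lemma code_nonempty N M (A : 'M[nat]_N) (omega : 'I_M -> seq 'I_N) :
  is_code A omega -> forall i, omega i != [::].
Proof.
case=> _ _ _ H i; apply/eqP=> E.
have := H [:: i] [::]; rewrite /concat_code /= E /=.
by case.
Qed.

Lemma path_code N M (A : 'M[nat]_N) (omega : 'I_M -> seq 'I_N) :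
  is_code A omega -> forall ks k0 pre,
  admissible A (pre ++ concat_code omega (k0 :: ks)) ->
  path (fun a b => code_matrix A omega a b == 1) k0 ks.
Proof.
move=> Hc; elim=> [//|k1 ks IH] k0 pre H /=; apply/andP; split; last first.
  apply: (IH k1 (pre ++ omega k0)).
  by move: H; rewrite /concat_code /= catA.
have := code_nonempty Hc k0; have := code_nonempty Hc k1.
case E1: (omega k1) => [//|s q] _.
case/lastP E0: (omega k0) => [//|p r] _.
rewrite mxE E1 E0 rev_rcons.
move: H; rewrite /concat_code /= E1 E0 => H.
have H' : admissible A ((pre ++ p) ++ r :: s :: (q ++ flatten [seq omega i | i <- ks])).
  by move: H; rewrite -!catA -cats1 -catA.
have := adm_nth r (i := size (pre ++ p)) H'.
rewrite !nth_cat ltnn subnn (_ : (size (pre ++ p)).+1 < size (pre ++ p) = false); last by rewrite ltnNge leqnSn.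
rewrite subSnn /= => -> //.
by rewrite !size_cat /= !addnS !ltnS leq_addr.
Qed.

Lemma succ_exists N (A : 'M[nat]_N) : irreducible_mx A ->
  forall i, exists j, A i j == 1.
Proof.
move=> Hirr i; have [[|j s] [//= _ [/andP [Hj _] _]]] := Hirr i i.
by exists j.
Qed.

Lemma branch N (A : 'M[nat]_N) : zero_one_matrix A -> irreducible_mx A ->
  ~ permutation_mx A ->
  exists a b c, [/\ b != c, A a b = 1 & A a c = 1].
Proof.
move=> zo Hirr Hnp.
case: (boolP [exists a, exists b, exists c, (b != c) && (A a b == 1) && (A a c == 1)]).
  move/existsP => [a /existsP [b /existsP [c /andP [/andP [H1 /eqP H2] /eqP H3]]]].
  by exists a, b, c.
move=> Hn; exfalso.
pose succ i := odflt i [pick j | A i j == 1].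
have Hs : forall i, A i (succ i) = 1.
  move=> i; rewrite /succ; case: pickP => [j /eqP //| H0].
  by have [j Hj] := succ_exists Hirr i; rewrite H0 in Hj.
have Hu : forall i j, A i j = 1 -> j = succ i.
  move=> i j Hij; move: Hn; rewrite negb_exists => /forallP /(_ i).
  rewrite negb_exists => /forallP /(_ j); rewrite negb_exists => /forallP /(_ (succ i)).
  by rewrite Hij Hs eqxx !andbT negbK => /eqP.
have Hsurj : forall j, j \in codom succ.
  move=> j; have [s [Hs0 [Hp Hl]]] := Hirr j j.
  case/lastP: s Hs0 Hp Hl => [//|p l] _; rewrite rcons_path last_rcons => /andP [_ /eqP H] El.
  subst l; apply/codomP; exists (last j p); exact: Hu.
have Hinj : injective succ.
  have H : {in predT &, injective succ}.
    apply/image_injP. rewrite [X in X == _]eq_cardT ?[X in _ == X]eq_cardT //.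
  by move=> x y; apply: H; rewrite inE.
apply: Hnp; exists (perm Hinj) => i j; rewrite permE.
case: eqVneq => [<-|ne]; first by rewrite Hs.
have := zo i j; case E: (A i j) => [//|[|//]] _.
by move: ne; rewrite (Hu _ _ E) eqxx.
Qed.

Lemma succ_spec N (A : 'M[nat]_N) : irreducible_mx A ->
  exists succ : 'I_N -> 'I_N, forall i, A i (succ i) = 1.
Proof.
move=> Hirr; exists (fun i => odflt i [pick j | A i j == 1]) => i.
case: pickP => [j /eqP //| H0].
by have [j Hj] := succ_exists Hirr i; rewrite H0 in Hj.
Qed.

Lemma cmp N M (omega : 'I_M -> seq 'I_N) (sigma : 'I_M -> 'I_M) k0 n n'
  (X Y eta eta' : seq 'I_N) d i :
  X ++ eta = concat_code omega (traject sigma k0 n) ->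
  Y ++ eta' = concat_code omega (traject sigma k0 n') ->
  i < size X -> i < size Y -> nth d X i = nth d Y i.
Proof.
wlog le : n n' X Y eta eta' / n <= n'.
  move=> W E1 E2 h1 h2; case: (leqP n n') => H; first exact: (W n n' _ _ eta eta').
  symmetry; exact: (W n' n Y X eta' eta (ltnW H) E2 E1).
move=> E1 E2 h1 h2.
move: E2; rewrite -(subnKC le) trajectD /concat_code map_cat flatten_cat -/(concat_code _ _) -E1.
move=> E2.
have -> : nth d Y i = nth d (Y ++ eta') i by rewrite nth_cat h2.
rewrite E2 nth_cat size_cat (leq_trans h1 (leq_addr _ _)) nth_cat h1 //.
Qed.

Lemma size_fl (T : Type) (C : seq T) m : size (flatten (nseq m C)) = m * size C.
Proof. by elim: m => //= m IH; rewrite size_cat IH mulSn. Qed.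

Theorem mainTheorem6 (N M : nat) (A : 'M[nat]_N) (omega : 'I_M -> seq 'I_N) :
  zero_one_matrix A -> irreducible_mx A -> ~ permutation_mx A ->
  right_Markov_code A omega ->
  irreducible_mx (code_matrix A omega) /\ ~ permutation_mx (code_matrix A omega).
Proof.
move=> zo Hirr Hnp [[Hc Hpre] Hi Hii Hiii].
split.
  move=> i j; have [ns Hns] := Hiii i j.
  exists (ns ++ [:: j]); split; first by case: ns {Hns}.
  split; last by rewrite last_cat.
  apply: (path_code Hc (pre:=[::])).
  by move: Hns; rewrite /concat_code /= map_cat flatten_cat /= cats0.
move=> [sigma Hsig].
have [a [b [c [Hbc Hab Hac]]]] := branch zo Hirr Hnp.
have [t [_ [Htp Htl]]] := Hirr b a.
pose C := b :: t.
have Hfl : forall m, path (fun u v => A u v == 1) a (flatten (nseq m C))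
                     /\ last a (flatten (nseq m C)) = a.
  elim=> [//|m [IH1 IH2]] /=.
  by rewrite cat_path last_cat /= Hab eqxx /= Htp Htl IH1 IH2.
pose w (m : nat) := a :: (flatten (nseq m C) ++ [:: c]).
have [succ Hs] := succ_spec Hirr.
have Hadm : forall m, admissible A (w m).
  move=> m; apply: (path_adm Hs).
  by have [H1 H2] := Hfl m; rewrite cat_path H1 H2 /= Hac.
have Hdec : forall m : 'I_M.+1, exists k0 : 'I_M, exists n eta,
    w m ++ eta = concat_code omega (traject sigma k0 n).
  move=> m; have [eta [_ [Hadm2 [ks [Eks _]]]]] := Hi _ (Hadm m).
  case: ks Eks => [|k0 rest] Eks; first by rewrite /concat_code /= in Eks.
  have Hp := path_code Hc (pre:=[::]) (ks:=rest) (k0:=k0).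
  rewrite /= -Eks in Hp; have {}Hp := Hp Hadm2.
  have : fpath sigma k0 rest.
    rewrite -(@eq_path _ (fun a b => code_matrix A omega a b == 1)) //.
    by move=> x y /=; rewrite Hsig; case: (sigma x == y).
  case/fpathP => n E; exists k0, n.+1, eta; by rewrite Eks E.
pose f m := proj1_sig (constructive_indefinite_description _ (Hdec m)).
have Hf : forall m : 'I_M.+1, exists n eta, w m ++ eta = concat_code omega (traject sigma (f m) n).
  move=> m; exact: (proj2_sig (constructive_indefinite_description _ (Hdec m))).
have key : forall m m' : 'I_M.+1, m < m' -> f m = f m' -> False.
  move=> m m' lt E.
  have [n [eta E1]] := Hf m; have [n' [eta' E2]] := Hf m'.
  rewrite -E in E2.
  have := cmp a (i := (m * size C).+1) E1 E2.
  have Hm' : flatten (nseq m' C) = flatten (nseq m C) ++ C ++ flatten (nseq (m' - m).-1 C).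
    rewrite -(subnKC (ltnW lt)) nseqD flatten_cat; congr (_ ++ _).
    rewrite addKn; have : 0 < m' - m by rewrite subn_gt0.
    by case: (m' - m).
  have Hwm : nth a (w m) (m * size C).+1 = c.
    by rewrite /w /= nth_cat size_fl ltnn subnn.
  have Hwm' : nth a (w m') (m * size C).+1 = b.
    by rewrite /w /= Hm' -!catA nth_cat size_fl ltnn subnn.
  rewrite Hwm Hwm' => H.
  move: Hbc; rewrite H ?eqxx //.
    by rewrite /w /= size_cat size_fl /=; lia.
  by rewrite /w /= Hm' !size_cat size_fl /=; lia.
have Hinj : injective f.
  move=> m m' E; case: (ltngtP m m') => H.
  - by case: (key _ _ H E).
  - by case: (key _ _ H (esym E)).
  - exact: val_inj.
have := @leq_card _ _ f Hinj. by rewrite !card_ord ltnn.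
Qed.
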